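(* Let $k\ge 0$ be an integer and let $f_k(x)\in\mathbb{Q}[x]$ be a monic polynomial of degree $k+1$ such that for all integers $g>3k$, \[\#\{S\in\mathcal{S}_g\mid m(S)=g-k\}=\frac{1}{(k+1)!}f_k(g).\] Then $f_k(x)$ has integer coefficients.
   Context: A numerical semigroup $S$ is a submonoid of $\mathbb{N}_0$ with finite complement; its genus is the size of the complement and $m(S)$ its smallest nonzero element. $\mathcal{S}_g$ is the set of numerical semigroups of genus $g$. (It is known that for each $k\ge0$ such a monic polynomial $f_k$ of degree $k+1$ exists.) *)

(* Defs.v *)
From mathcomp Require Import all_boot all_order all_algebra.
From mathcomp Require Import finmap.
Set Implicit Arguments. Unset Strict Implicit. Unset Printing Implicit Defensive.
Import GRing.Theory Num.Theory.
Local Open Scope fset_scope.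

(* A numerical semigroup S (submonoid of N_0 with finite complement) is
   represented by its (finite) set of gaps G = N_0 \ S.  S = {n | n \notin G}. *)
Definition is_numsg (G : {fset nat}) : Prop :=
  (0 \notin G) /\ (forall x y : nat, x \notin G -> y \notin G -> (x + y)%N \notin G).

Definition genus (G : {fset nat}) : nat := #|` G|.

Definition multiplicity_is (G : {fset nat}) (m : nat) : Prop :=
  [/\ (0 < m)%N, m \notin G & forall j : nat, (0 < j < m)%N -> j \in G].

Definition has_card (P : {fset nat} -> Prop) (n : nat) : Prop :=
  exists l : seq {fset nat}, [/\ uniq l, size l = n & forall G, G \in l <-> P G].

Definition num_sg_genus_mult (g m n : nat) : Prop :=
  has_card (fun G => [/\ is_numsg G, genus G = g & multiplicity_is G m]) n.

(* Main.v *)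
Require Import Defs.
From mathcomp Require Import all_boot all_order all_algebra.
Import GRing.Theory Num.Theory.
Local Open Scope ring_scope.
Definition intp (p : {poly rat}) := forall i, p`_i \is a Num.int.
Lemma intpD p q : intp p -> intp q -> intp (p + q).
Proof. by move=> hp hq i; rewrite coefD rpredD. Qed.
Lemma intpZ c p : c \is a Num.int -> intp p -> intp (c *: p).
Proof. by move=> hc hp i; rewrite coefZ rpredM. Qed.
Lemma intpM p q : intp p -> intp q -> intp (p * q).
Proof. by move=> hp hq i; rewrite coefM rpred_sum // => j _; rewrite rpredM. Qed.
Lemma intpC c : c \is a Num.int -> intp c%:P.
Proof. by move=> hc i; rewrite coefC; case: eqP. Qed.
Lemma intpXsubC c : c \is a Num.int -> intp ('X - c%:P).
Proof. by move=> hc i; rewrite coefB coefX coefC; case: eqP; case: eqP; rewrite ?rpredB ?rpred0 ?rpred1. Qed.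
Lemma intp_prod (s : seq nat) (F : nat -> rat) : (forall i, F i \is a Num.int) ->
  intp (\prod_(i <- s) ('X - (F i)%:P)).
Proof.
move=> hF; elim: s => [|x s IH]; first by rewrite big_nil; apply: intpC; rewrite rpred1.
by rewrite big_cons; apply: intpM => //; apply: intpXsubC.
Qed.

Lemma Weval (a n m : nat) :
  (\prod_(i <- iota 0 n) ('X - ((a + i)%:R : rat)%:P)).[(a + m)%:R] = (m ^_ n)%:R.
Proof.
rewrite horner_prod; elim: n => [|n IH]; first by rewrite big_nil.
rewrite ffactnSr -addn1 iotaD big_cat big_seq1 /= IH add0n hornerXsubC.
have [lt|le] := ltnP m n; first by rewrite ffact_small // !mul0r.
by rewrite natrM natrB // !natrD opprD addrACA subrr add0r.
Qed.

Lemma key (a n : nat) (p : {poly rat}) :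
  (size p <= n.+1)%N ->
  (forall j, (j <= n)%N -> p.[(a + j)%:R] \is a Num.int) ->
  (forall m, p.[(a + m)%:R] \is a Num.int) /\ intp (n`!%:R *: p).
Proof.
elim: n p => [|n IH] p sp hp.
  rewrite (size1_polyC sp) in hp *.
  have h0 := hp 0%N (leqnn 0); rewrite hornerC in h0.
  split=> [m|]; first by rewrite hornerC.
  by rewrite scale1r; apply: intpC.
pose W := \prod_(i <- iota 0 n.+1) ('X - ((a + i)%:R : rat)%:P).
have sW : size W = n.+2 by rewrite size_prod_XsubC size_iota.
have mW : W \is monic by apply: monic_prod_XsubC.
have WP : intp W by apply: intp_prod => i; rewrite rpred_nat.
pose c := p`_n.+1.
pose r := p - c *: W.
have sr : (size r <= n.+1)%N.
  apply/leq_sizeP => j; rewrite leq_eqVlt => /orP[/eqP <-|lt].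
    rewrite coefB coefZ.
    have -> : W`_n.+1 = 1 by move: mW => /monicP; rewrite /lead_coef sW.
    by rewrite mulr1 subrr.
  rewrite coefB coefZ (leq_sizeP _ _ sp) // (leq_sizeP _ _ (eq_leq sW)) //.
  by rewrite mulr0 subrr.
have Wv m : W.[(a + m)%:R] = (m ^_ n.+1)%:R by rewrite /W Weval.
have rv m : r.[(a + m)%:R] = p.[(a + m)%:R] - c * (m ^_ n.+1)%:R.
  by rewrite /r hornerD hornerN hornerZ Wv.
have [IHv IHp] : (forall m, r.[(a + m)%:R] \is a Num.int) /\ intp (n`!%:R *: r).
  apply: IH => // j lej; rewrite rv ffact_small ?mulr0 ?subr0 ?hp //. all: try exact: leqW. all: try by rewrite ltnS.
have cI : c * (n.+1)`!%:R \is a Num.int.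
  have := rv n.+1; rewrite ffactnn => e.
  have -> : c * (n.+1)`!%:R = p.[(a + n.+1)%:R] - r.[(a + n.+1)%:R].
    by rewrite e opprB addrC subrK.
  by rewrite rpredB ?hp ?IHv.
have pE : p = r + c *: W by rewrite /r subrK.
split=> [m|].
  rewrite pE hornerD hornerZ Wv -bin_ffact natrM mulrCA.
  by rewrite rpredD ?IHv // rpredM ?rpred_nat // mulrC.
rewrite pE scalerDr scalerA factS natrM -scalerA.
apply: intpD; first by apply: intpZ => //; rewrite rpred_nat.
by apply: intpZ => //; rewrite -natrM -factS mulrC.
Qed.

Theorem corollary1p11 (k : nat) (f : {poly rat}) :
  f \is monic -> size f = (k + 2)%N ->
  (forall g : nat, (3 * k < g)%N ->
     exists n : nat, num_sg_genus_mult g (g - k) n /\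
       n%:R = f.[g%:R] / (k.+1)`!%:R) ->
  forall i : nat, exists z : int, f`_i = z%:~R.
Proof.
move=> _ sf hf i.
have F0 : (k.+1)`!%:R != 0 :> rat by rewrite pnatr_eq0 -lt0n fact_gt0.
have s1 : (size (((k.+1)`!%:R)^-1 *: f) <= k.+2)%N.
  by rewrite size_scale ?invr_eq0 // sf addn2.
have h1 : forall j, (j <= k.+1)%N ->
    (((k.+1)`!%:R)^-1 *: f).[((3 * k).+1 + j)%:R] \is a Num.int.
  move=> j _.
  have [n [_ e]] := hf ((3 * k).+1 + j)%N (leq_addr _ _).
  by rewrite hornerZ mulrC -e rpred_nat.
have [_ hI] := @key _ k.+1 _ s1 h1.
move: (hI i); rewrite scalerA mulfV // scale1r.
by move/intrP.
Qed.
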